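(* Let $G_0$ be a group generated by two elements $x,y$ such that (1) $x^4=y^4=1$; (2) $[x,y]^2=[[x,y],x]^2=[[x,y],y]^2=1$; (3) $[[x,y],x]$ and $[[x,y],y]$ each commute with $x$ and with $y$. Then (a) $yx=xy[x,y]$, (b) $[x,y]x=x[x,y][[x,y],x]$, (c) $[x,y]y=y[x,y][[x,y],y]$, and $|G_0|\le128$. If in addition $y^2=1$, then $[[x,y],y]=1$ and $|G_0|\le 32$.
   Context: Commutators are $[\sigma,\tau]=\sigma^{-1}\tau^{-1}\sigma\tau$. *)

(* Defs.v *)
From Stdlib Require Import List.

Set Implicit Arguments.

Record is_group (G : Type) (mul : G -> G -> G) (one : G) (inv : G -> G) : Prop := {
  grp_assoc : forall a b c, mul a (mul b c) = mul (mul a b) c;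
  grp_mul1g : forall a, mul one a = a;
  grp_mulg1 : forall a, mul a one = a;
  grp_mulVg : forall a, mul (inv a) a = one;
  grp_mulgV : forall a, mul a (inv a) = one
}.

Fixpoint gpow (G : Type) (mul : G -> G -> G) (one : G) (a : G) (n : nat) : G :=
  match n with
  | O => one
  | S k => mul a (gpow mul one a k)
  end.

Definition comm (G : Type) (mul : G -> G -> G) (inv : G -> G) (a b : G) : G :=
  mul (mul (inv a) (inv b)) (mul a b).

Inductive generated (G : Type) (mul : G -> G -> G) (one : G) (inv : G -> G)
    (x y : G) : G -> Prop :=
  | gen_one : generated mul one inv x y one
  | gen_x : generated mul one inv x y x
  | gen_y : generated mul one inv x y y
  | gen_mul : forall a b, generated mul one inv x y a ->
      generated mul one inv x y b -> generated mul one inv x y (mul a b)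
  | gen_inv : forall a, generated mul one inv x y a ->
      generated mul one inv x y (inv a).

Definition card_le (G : Type) (n : nat) : Prop :=
  exists l : list G, length l <= n /\ forall g : G, In g l.

(* Main.v *)
Require Import Defs.
From Stdlib Require Import List Arith Lia.

Lemma mA {G} {mul : G -> G -> G} {one inv} (Hg : is_group mul one inv) a b c :
  mul (mul a b) c = mul a (mul b c).
Proof. symmetry; apply (grp_assoc Hg). Qed.

Lemma canl {G} {mul : G -> G -> G} {one inv} (Hg : is_group mul one inv) a t :
  mul a (mul (inv a) t) = t.
Proof. rewrite (grp_assoc Hg), (grp_mulgV Hg), (grp_mul1g Hg); auto. Qed.

Lemma canl' {G} {mul : G -> G -> G} {one inv} (Hg : is_group mul one inv) a t :
  mul (inv a) (mul a t) = t.
Proof. rewrite (grp_assoc Hg), (grp_mulVg Hg), (grp_mul1g Hg); auto. Qed.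

Lemma inv_uniq {G} {mul : G -> G -> G} {one inv} (Hg : is_group mul one inv) a b :
  mul a b = one -> inv a = b.
Proof.
  intro H. rewrite <- (grp_mulg1 Hg (inv a)), <- H. rewrite (canl' Hg). auto.
Qed.

Lemma inv_inv {G} {mul : G -> G -> G} {one inv} (Hg : is_group mul one inv) a :
  inv (inv a) = a.
Proof. apply (inv_uniq Hg). apply (grp_mulVg Hg). Qed.

Lemma inv_mul {G} {mul : G -> G -> G} {one inv} (Hg : is_group mul one inv) a b :
  inv (mul a b) = mul (inv b) (inv a).
Proof.
  apply (inv_uniq Hg). rewrite (mA Hg), (canl Hg). apply (grp_mulgV Hg).
Qed.

Lemma inv_one {G} {mul : G -> G -> G} {one inv} (Hg : is_group mul one inv) :
  inv one = one.
Proof. apply (inv_uniq Hg). apply (grp_mul1g Hg). Qed.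

Lemma gpow_S_r {G} {mul : G -> G -> G} {one inv} (Hg : is_group mul one inv) a n :
  gpow mul one a (S n) = mul (gpow mul one a n) a.
Proof.
  induction n as [|n IH]; simpl.
  - rewrite (grp_mulg1 Hg), (grp_mul1g Hg). auto.
  - simpl in IH. rewrite IH at 1. rewrite (grp_assoc Hg). auto.
Qed.

Lemma gpow_add {G} {mul : G -> G -> G} {one inv} (Hg : is_group mul one inv) a n m :
  gpow mul one a (n + m) = mul (gpow mul one a n) (gpow mul one a m).
Proof.
  induction n as [|n IH]; simpl.
  - rewrite (grp_mul1g Hg). auto.
  - rewrite IH, (mA Hg). auto.
Qed.

Lemma gpow_one {G} {mul : G -> G -> G} {one inv} (Hg : is_group mul one inv) n :
  gpow mul one one n = one.
Proof. induction n; simpl; auto. rewrite IHn. apply (grp_mul1g Hg). Qed.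

Lemma gpow_mult_one {G} {mul : G -> G -> G} {one inv} (Hg : is_group mul one inv) a p q :
  gpow mul one a p = one -> gpow mul one a (q * p) = one.
Proof.
  intro H. induction q as [|q IH]; simpl; auto.
  rewrite (gpow_add Hg), H, IH. apply (grp_mul1g Hg).
Qed.

Lemma gpow_mod {G} {mul : G -> G -> G} {one inv} (Hg : is_group mul one inv) a p n :
  p <> 0 -> gpow mul one a p = one -> gpow mul one a n = gpow mul one a (n mod p).
Proof.
  intros Hp H. rewrite (Nat.div_mod n p Hp) at 1.
  rewrite (gpow_add Hg), Nat.mul_comm, (gpow_mult_one Hg _ _ _ H), (grp_mul1g Hg). auto.
Qed.

Lemma comm_inv {G} {mul : G -> G -> G} {one inv} (Hg : is_group mul one inv) z g :
  mul z g = mul g z -> mul z (inv g) = mul (inv g) z.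
Proof.
  intro H.
  rewrite <- (canl' Hg g (mul z (inv g))). rewrite <- (mA Hg g z), <- H.
  rewrite (mA Hg), (grp_mulgV Hg), (grp_mulg1 Hg). auto.
Qed.

Lemma central_gen {G} {mul : G -> G -> G} {one inv} (Hg : is_group mul one inv) x y z g :
  mul z x = mul x z -> mul z y = mul y z -> generated mul one inv x y g ->
  mul z g = mul g z.
Proof.
  intros Hx Hy Hgen. induction Hgen; auto.
  - rewrite (grp_mulg1 Hg), (grp_mul1g Hg); auto.
  - rewrite <- (mA Hg), IHHgen1, (mA Hg), IHHgen2, (mA Hg). auto.
  - apply (comm_inv Hg); auto.
Qed.

Lemma comm_pow {G} {mul : G -> G -> G} {one inv} (Hg : is_group mul one inv) z n :
  (forall g, mul z g = mul g z) -> forall g, mul (gpow mul one z n) g = mul g (gpow mul one z n).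
Proof.
  intros Hz g. induction n as [|n IH]; simpl.
  - rewrite (grp_mulg1 Hg), (grp_mul1g Hg); auto.
  - rewrite (mA Hg), IH, <- (mA Hg), Hz, (mA Hg). auto.
Qed.

Lemma central_swap {G} {mul : G -> G -> G} {one inv} (Hg : is_group mul one inv) z w t :
  (forall g, mul z g = mul g z) -> mul z (mul w t) = mul w (mul z t).
Proof. intro Hz. rewrite <- (mA Hg), Hz, (mA Hg). auto. Qed.

Lemma twist1 {G} {mul : G -> G -> G} {one inv} (Hg : is_group mul one inv) c y b i :
  (forall g, mul b g = mul g b) -> mul c y = mul y (mul c b) ->
  mul (gpow mul one c i) y = mul y (mul (gpow mul one c i) (gpow mul one b i)).
Proof.
  intros Hb H. induction i as [|i IH]; simpl.
  - rewrite (grp_mulg1 Hg), (grp_mul1g Hg), (grp_mulg1 Hg); auto.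
  - rewrite (mA Hg), IH, <- (mA Hg), H, !(mA Hg).
    f_equal. f_equal. rewrite (central_swap Hg); auto.
Qed.

Lemma twist {G} {mul : G -> G -> G} {one inv} (Hg : is_group mul one inv) c y b i j :
  (forall g, mul b g = mul g b) -> mul c y = mul y (mul c b) ->
  mul (gpow mul one c i) (gpow mul one y j)
  = mul (gpow mul one y j) (mul (gpow mul one c i) (gpow mul one b (i * j))).
Proof.
  intros Hb H. induction j as [|j IH]; simpl.
  - rewrite Nat.mul_0_r. simpl. rewrite ?(grp_mulg1 Hg), ?(grp_mul1g Hg), ?(grp_mulg1 Hg); auto.
  - rewrite <- (mA Hg), (twist1 Hg c y b i Hb H), !(mA Hg).
    f_equal.
    rewrite (comm_pow Hg b i Hb).
    rewrite <- (mA Hg), IH, !(mA Hg). f_equal. f_equal.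
    rewrite Nat.mul_succ_r, (gpow_add Hg). auto.
Qed.

Theorem proposition2p7 (G : Type) (mul : G -> G -> G) (one : G) (inv : G -> G)
  (x y : G)
  (Hgrp : is_group mul one inv)
  (Hgen : forall g : G, generated mul one inv x y g)
  (Hx4 : gpow mul one x 4 = one)
  (Hy4 : gpow mul one y 4 = one)
  (Hc2 : gpow mul one (comm mul inv x y) 2 = one)
  (Hcx2 : gpow mul one (comm mul inv (comm mul inv x y) x) 2 = one)
  (Hcy2 : gpow mul one (comm mul inv (comm mul inv x y) y) 2 = one)
  (Hcx_x : mul (comm mul inv (comm mul inv x y) x) x
           = mul x (comm mul inv (comm mul inv x y) x))
  (Hcx_y : mul (comm mul inv (comm mul inv x y) x) y
           = mul y (comm mul inv (comm mul inv x y) x))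
  (Hcy_x : mul (comm mul inv (comm mul inv x y) y) x
           = mul x (comm mul inv (comm mul inv x y) y))
  (Hcy_y : mul (comm mul inv (comm mul inv x y) y) y
           = mul y (comm mul inv (comm mul inv x y) y)) :
  mul y x = mul (mul x y) (comm mul inv x y) /\
  mul (comm mul inv x y) x
    = mul (mul x (comm mul inv x y)) (comm mul inv (comm mul inv x y) x) /\
  mul (comm mul inv x y) y
    = mul (mul y (comm mul inv x y)) (comm mul inv (comm mul inv x y) y) /\
  card_le G 128 /\
  (gpow mul one y 2 = one ->
     comm mul inv (comm mul inv x y) y = one /\ card_le G 32).
Proof.
  set (c := comm mul inv x y) in *.
  set (a := comm mul inv c x) in *.
  set (b := comm mul inv c y) in *.
  pose proof Hgrp as Hg.
  destruct Hgrp as [_ H1g Hg1 HVg HgV].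
  assert (Ha : forall g, mul a g = mul g a).
  { intro g. apply (central_gen Hg x y); auto. }
  assert (Hb : forall g, mul b g = mul g b).
  { intro g. apply (central_gen Hg x y); auto. }
  assert (Hcc : mul c c = one).
  { simpl in Hc2. rewrite Hg1 in Hc2. exact Hc2. }
  assert (HA : mul y x = mul x (mul y c)).
  { assert (E : mul y (mul x c) = mul x y).
    { unfold c, comm. rewrite !(mA Hg), (canl Hg), (canl Hg). auto. }
    rewrite <- (Hg1 (mul y x)), <- Hcc, <- !(mA Hg).
    rewrite (mA Hg y), E, (mA Hg). auto. }
  assert (HB : mul c x = mul x (mul c a)).
  { unfold a, comm. rewrite !(mA Hg), (canl Hg), (canl Hg). auto. }
  assert (HC : mul c y = mul y (mul c b)).
  { unfold b, comm. rewrite !(mA Hg), (canl Hg), (canl Hg). auto. }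
  split; [rewrite (mA Hg); exact HA|].
  split; [rewrite (mA Hg); exact HB|].
  split; [rewrite (mA Hg); exact HC|].
  assert (HyX : forall i, exists k l, mul y (gpow mul one x i)
     = mul (gpow mul one x i) (mul y (mul (gpow mul one c k) (gpow mul one a l)))).
  { induction i as [|i [k [l IH]]].
    - exists 0, 0. simpl. rewrite Hg1, H1g, Hg1. auto.
    - exists (S k), (k + l). rewrite (gpow_S_r Hg x i).
      rewrite <- (mA Hg y), IH, !(mA Hg).
      rewrite (comm_pow Hg a l Ha x), <- (mA Hg (gpow mul one c k) x).
      rewrite (twist1 Hg c x a k Ha HB).
      rewrite !(mA Hg), <- (mA Hg y x), HA, (gpow_add Hg). simpl. rewrite !(mA Hg). auto. }
  assert (Hpa : forall n g, mul (gpow mul one a n) g = mul g (gpow mul one a n))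
    by (intros; apply (comm_pow Hg); auto).
  assert (Hpb : forall n g, mul (gpow mul one b n) g = mul g (gpow mul one b n))
    by (intros; apply (comm_pow Hg); auto).
  set (NF := fun i j k l m => mul (gpow mul one x i) (mul (gpow mul one y j)
      (mul (gpow mul one c k) (mul (gpow mul one a l) (gpow mul one b m))))).
  set (S0 := fun g => exists i j k l m, g = NF i j k l m).
  assert (HxS : forall g, S0 g -> S0 (mul x g)).
  { intros g [i [j [k [l [m ->]]]]]. exists (S i), j, k, l, m.
    unfold NF. simpl. rewrite (mA Hg). auto. }
  assert (HyS : forall g, S0 g -> S0 (mul y g)).
  { intros g [i [j [k [l [m ->]]]]].
    destruct (HyX i) as [k0 [l0 E]].
    exists i, (S j), (k0 + k), (l0 + l), (k0 * j + m).
    unfold NF. rewrite <- (mA Hg y), E, !(mA Hg), !(gpow_add Hg). simpl.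
    rewrite !(mA Hg). f_equal. f_equal.
    rewrite (central_swap Hg _ (gpow mul one y j) _ (Hpa l0)).
    rewrite <- (mA Hg (gpow mul one c k0) (gpow mul one y j)).
    rewrite (twist Hg c y b k0 j Hb HC), !(mA Hg). f_equal. f_equal.
    repeat rewrite (central_swap Hg (gpow mul one b (k0 * j)) _ _ (Hpb _)).
    rewrite (central_swap Hg _ (gpow mul one c k) _ (Hpa l0)). auto. }
  assert (Hix : inv x = mul x (mul x (mul x one))).
  { apply (inv_uniq Hg). exact Hx4. }
  assert (Hiy : inv y = mul y (mul y (mul y one))).
  { apply (inv_uniq Hg). exact Hy4. }
  assert (Hcl : forall g, generated mul one inv x y g ->
            forall s, S0 s -> S0 (mul g s) /\ S0 (mul (inv g) s)).
  { intros g Hgg. induction Hgg; intros s Hs.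
    - rewrite (inv_one Hg), H1g. auto.
    - split; auto. rewrite Hix, !(mA Hg), H1g. auto.
    - split; auto. rewrite Hiy, !(mA Hg), H1g. auto.
    - rewrite (inv_mul Hg), !(mA Hg). split.
      + apply IHHgg1, IHHgg2, Hs.
      + apply IHHgg2, IHHgg1, Hs.
    - rewrite (inv_inv Hg). destruct (IHHgg s Hs); auto. }
  assert (Hall : forall g, exists i j k l m, g = NF i j k l m).
  { intro g. rewrite <- (Hg1 g). apply (Hcl g (Hgen g)).
    exists 0, 0, 0, 0, 0. unfold NF. simpl. rewrite !H1g. auto. }
  split.
  { exists (flat_map (fun i => flat_map (fun j => flat_map (fun k => flat_map (fun l =>
       map (fun m => NF i j k l m) (seq 0 2)) (seq 0 2)) (seq 0 2)) (seq 0 4)) (seq 0 4)).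
    split; [simpl; lia|].
    intro g. destruct (Hall g) as [i [j [k [l [m ->]]]]].
    assert (E : NF i j k l m = NF (i mod 4) (j mod 4) (k mod 2) (l mod 2) (m mod 2)).
    { unfold NF. rewrite (gpow_mod Hg x 4 i), (gpow_mod Hg y 4 j), (gpow_mod Hg c 2 k),
        (gpow_mod Hg a 2 l), (gpow_mod Hg b 2 m); auto. }
    rewrite E.
    apply in_flat_map; exists (i mod 4); split; [apply in_seq; pose proof (Nat.mod_upper_bound i 4); lia|].
    apply in_flat_map; exists (j mod 4); split; [apply in_seq; pose proof (Nat.mod_upper_bound j 4); lia|].
    apply in_flat_map; exists (k mod 2); split; [apply in_seq; pose proof (Nat.mod_upper_bound k 2); lia|].
    apply in_flat_map; exists (l mod 2); split; [apply in_seq; pose proof (Nat.mod_upper_bound l 2); lia|].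
    apply in_map; apply in_seq; pose proof (Nat.mod_upper_bound m 2); lia. }
  intro Hy2. simpl in Hy2. rewrite Hg1 in Hy2.
  assert (Hiy2 : inv y = y) by (apply (inv_uniq Hg); exact Hy2).
  assert (Hyy : forall t, mul y (mul y t) = t) by (intro t; rewrite <- (mA Hg), Hy2; auto).
  assert (Hic : inv c = c) by (apply (inv_uniq Hg); exact Hcc).
  assert (Hc' : c = mul y (mul (inv x) (mul y x))).
  { rewrite <- Hic at 1. unfold c at 1. unfold comm.
    rewrite (inv_mul Hg), (inv_mul Hg), (inv_mul Hg), !(inv_inv Hg), Hiy2, !(mA Hg). auto. }
  assert (Hc'' : c = mul (inv x) (mul y (mul x y))).
  { unfold c at 1. unfold comm. rewrite Hiy2, !(mA Hg). auto. }
  assert (Hb1 : b = one).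
  { unfold b at 1. unfold comm. rewrite Hic, Hiy2, !(mA Hg).
    rewrite Hc' at 2. rewrite !(mA Hg), Hyy, <- Hc''. exact Hcc. }
  split; [exact Hb1|].
  exists (flat_map (fun i => flat_map (fun j => flat_map (fun k =>
       map (fun l => NF i j k l 0) (seq 0 2)) (seq 0 2)) (seq 0 2)) (seq 0 4)).
  split; [simpl; lia|].
  intro g. destruct (Hall g) as [i [j [k [l [m ->]]]]].
  assert (E : NF i j k l m = NF (i mod 4) (j mod 2) (k mod 2) (l mod 2) 0).
  { unfold NF. rewrite (gpow_mod Hg x 4 i), (gpow_mod Hg y 2 j), (gpow_mod Hg c 2 k),
      (gpow_mod Hg a 2 l); auto.
    - rewrite Hb1, (gpow_one Hg). auto.
    - simpl. rewrite Hg1. auto. }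
  rewrite E.
  apply in_flat_map; exists (i mod 4); split; [apply in_seq; pose proof (Nat.mod_upper_bound i 4); lia|].
  apply in_flat_map; exists (j mod 2); split; [apply in_seq; pose proof (Nat.mod_upper_bound j 2); lia|].
  apply in_flat_map; exists (k mod 2); split; [apply in_seq; pose proof (Nat.mod_upper_bound k 2); lia|].
  apply in_map_iff; exists (l mod 2); split; [reflexivity|].
  apply in_seq; pose proof (Nat.mod_upper_bound l 2); lia.
Qed.
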